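(* Let $k\ge 2$ be an integer, $X$ a locally finite poset and $F$ a field admitting a primitive $(k-1)$-th root of unity. Then $f\in I(X,F)$ satisfies $f^k=f$ if and only if $f=\sigma d\sigma^{-1}$ for some invertible $\sigma\in I(X,F)$ and some diagonal $d\in I(X,F)$ each of whose diagonal entries $d(x,x)$ is either $0$ or a $(k-1)$-th root of unity in $F$.
   Context: $I(X,F)$ is the incidence algebra of the locally finite poset $X$ over $F$: functions $f:X\times X\to F$ vanishing unless $x\le y$, with product $(fg)(x,y)=\sum_{x\le z\le y}f(x,z)g(z,y)$. An element $d$ is diagonal if $d(x,y)=0$ whenever $x\ne y$. *)

(* Defs.v *)
From HB Require Import structures.
From mathcomp Require Import all_boot all_order all_algebra.
Set Implicit Arguments. Unset Strict Implicit. Unset Printing Implicit Defensive.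
Import Order.TTheory GRing.Theory.
Local Open Scope ring_scope.

(* A locally finite poset X is presented by a porderType together with, for
   every x y, a duplicate-free enumeration [itv x y] of the interval [x, y]. *)
Definition locally_finite_enum (disp : Order.disp_t) (X : porderType disp)
  (itv : X -> X -> seq X) : Prop :=
  (forall x y z, (z \in itv x y) = (x <= z <= y)%O) /\ (forall x y, uniq (itv x y)).

Section Incidence.
Variables (disp : Order.disp_t) (X : porderType disp) (F : fieldType).
Variable itv : X -> X -> seq X.

Definition incidence (f : X -> X -> F) : Prop :=
  forall x y, ~~ (x <= y)%O -> f x y = 0.

Definition inc_mul (f g : X -> X -> F) : X -> X -> F :=
  fun x y => \sum_(z <- itv x y) f x z * g z y.

Definition inc_one : X -> X -> F := fun x y => (x == y)%:R.

Fixpoint inc_pow (f : X -> X -> F) (n : nat) : X -> X -> F :=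
  match n with
  | 0 => inc_one
  | n'.+1 => inc_mul (inc_pow f n') f
  end.

Definition diagonal (d : X -> X -> F) : Prop :=
  forall x y, x != y -> d x y = 0.

Definition inc_invertible (s : X -> X -> F) : Prop :=
  exists t, incidence t /\ inc_mul s t = inc_one /\ inc_mul t s = inc_one.
End Incidence.
Arguments inc_one {disp X F}.

(* Main.v *)
Require Import Defs.
From HB Require Import structures.
From mathcomp Require Import all_boot all_order all_algebra.
From Stdlib Require Import FunctionalExtensionality.
Set Implicit Arguments. Unset Strict Implicit. Unset Printing Implicit Defensive.
Import Order.TTheory GRing.Theory.

Local Open Scope ring_scope.

Section Inc.
Variables (disp : Order.disp_t) (X : porderType disp) (F : fieldType).
Variable itv : X -> X -> seq X.
Hypothesis lf : locally_finite_enum itv.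
Local Notation mul := (inc_mul itv).

Lemma mem_itv x y z : (z \in itv x y) = (x <= z <= y)%O.
Proof. by case: lf. Qed.
Lemma uniq_itv x y : uniq (itv x y).
Proof. by case: lf. Qed.
Lemma itv_nil x y : ~~ (x <= y)%O -> itv x y = [::].
Proof.
move=> h; case E: (itv x y) => [|a s] //.
have : a \in itv x y by rewrite E mem_head.
by rewrite mem_itv => /andP[h1 h2]; rewrite (le_trans h1 h2) in h.
Qed.
Lemma self_itv x y : (x <= y)%O -> x \in itv x y.
Proof. by move=> h; rewrite mem_itv lexx h. Qed.
Lemma self_itvr x y : (x <= y)%O -> y \in itv x y.
Proof. by move=> h; rewrite mem_itv lexx h. Qed.

Lemma mul_inc (f g : X -> X -> F) : incidence (mul f g).
Proof. by move=> x y /itv_nil; rewrite /inc_mul => ->; rewrite big_nil. Qed.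
Lemma one_inc : incidence (@inc_one _ X F).
Proof.
move=> x y H; rewrite /inc_one; case: eqP => // e; subst.
by rewrite lexx in H.
Qed.
Lemma pow_inc (f : X -> X -> F) n : incidence (inc_pow itv f n).
Proof. case: n => [|n]; [exact: one_inc | exact: mul_inc]. Qed.

Lemma mul1f (f : X -> X -> F) : incidence f -> mul inc_one f = f.
Proof.
move=> Hf; apply: functional_extensionality => x; apply: functional_extensionality => y.
case: (boolP (x <= y)%O) => h; last by rewrite /inc_mul itv_nil // big_nil (Hf _ _ h).
rewrite /inc_mul (bigD1_seq x) ?self_itv ?uniq_itv //= /inc_one eqxx mul1r big1 ?addr0 //.
by move=> z /negbTE; rewrite eq_sym => ->; rewrite mul0r.
Qed.

Lemma mulf1 (f : X -> X -> F) : incidence f -> mul f inc_one = f.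
Proof.
move=> Hf; apply: functional_extensionality => x; apply: functional_extensionality => y.
case: (boolP (x <= y)%O) => h; last by rewrite /inc_mul itv_nil // big_nil (Hf _ _ h).
rewrite /inc_mul (bigD1_seq y) ?self_itvr ?uniq_itv //= /inc_one eqxx mulr1 big1 ?addr0 //.
by move=> z /negbTE ->; rewrite mulr0.
Qed.

Lemma diag_mul (a g : X -> X -> F) x y : diagonal a -> incidence g ->
  mul a g x y = a x x * g x y.
Proof.
move=> Ha Hg.
case: (boolP (x <= y)%O) => h; last by rewrite /inc_mul itv_nil // big_nil (Hg _ _ h) mulr0.
rewrite /inc_mul (bigD1_seq x) ?self_itv ?uniq_itv //= big1 ?addr0 //.
by move=> z zx; rewrite Ha ?mul0r // eq_sym.
Qed.

Lemma mul_xx (f g : X -> X -> F) x : mul f g x x = f x x * g x x.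
Proof.
rewrite /inc_mul (bigD1_seq x) ?self_itv ?uniq_itv //= big1_seq ?addr0 //.
move=> z /andP[zx]; rewrite mem_itv => /andP[h1 h2].
by have := le_anti (introT andP (conj h1 h2)); move=> e; rewrite e eqxx in zx.
Qed.

Lemma mulA (f g h : X -> X -> F) : mul (mul f g) h = mul f (mul g h).
Proof.
apply: functional_extensionality => x; apply: functional_extensionality => y.
rewrite /inc_mul.
transitivity (\sum_(z <- itv x y) \sum_(w <- itv x y | (w <= z)%O) f x w * g w z * h z y).
  apply: eq_big_seq => z zI; rewrite mulr_suml -[RHS]big_filter; apply: perm_big.
  apply: uniq_perm; rewrite ?filter_uniq ?uniq_itv // => w.
  move: zI; rewrite mem_filter !mem_itv => /andP[xz zy].
  apply/idP/idP; first by case/andP=> -> wz; rewrite wz (le_trans wz zy).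
  by case/andP=> -> /andP[-> _].
transitivity (\sum_(w <- itv x y) \sum_(z <- itv x y | (w <= z)%O) f x w * (g w z * h z y)).
  rewrite (eq_bigr _ (fun z _ => big_mkcond _ _)) /=.
  rewrite exchange_big /=.
  rewrite [RHS](eq_bigr _ (fun z _ => big_mkcond _ _)) /=.
  by apply: eq_bigr => w _; apply: eq_bigr => z _; rewrite mulrA.
apply: eq_big_seq => w wI; rewrite mulr_sumr -[LHS]big_filter; apply: perm_big.
apply: uniq_perm; rewrite ?filter_uniq ?uniq_itv // => z.
move: wI; rewrite mem_filter !mem_itv => /andP[xw wy].
apply/idP/idP; first by case/andP=> -> /andP[_ ->].
by case/andP=> wz ->; rewrite wz (le_trans xw wz).
Qed.

Section Inv.
Variable s : X -> X -> F.
Hypothesis Hs : incidence s.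
Hypothesis Hd : forall x, s x x != 0.

Fixpoint rinv (n : nat) (x y : X) : F :=
  match n with
  | 0 => 0
  | n'.+1 => if (x <= y)%O then (s x x)^-1 * ((x == y)%:R -
        \sum_(z <- itv x y | z != x) s x z * rinv n' z y) else 0
  end.

Lemma size_lt x y z : z \in itv x y -> z != x -> (size (itv z y) < size (itv x y))%N.
Proof.
rewrite mem_itv => /andP[xz zy] zx.
have -> : (size (itv z y)).+1 = size (x :: itv z y) by [].
apply: uniq_leq_size.
  rewrite /= uniq_itv andbT mem_itv; apply/negP => /andP[zx' _].
  by have := le_anti (introT andP (conj xz zx')); move=> e; rewrite e eqxx in zx.
move=> w; rewrite inE mem_itv => /orP[/eqP -> | /andP[zw wy]].
  by rewrite mem_itv lexx (le_trans xz zy).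
by rewrite mem_itv (le_trans xz zw) wy.
Qed.

Lemma rinv_stab n m x y : (size (itv x y) <= n)%N -> (size (itv x y) <= m)%N ->
  rinv n x y = rinv m x y.
Proof.
elim: n m x y => [|n IH] [|m] x y hn hm.
- by [].
- rewrite [rinv m.+1 _ _]/=; case: ifP => hxy; last by [].
  move: hn; rewrite leqn0 size_eq0 => /eqP E.
  by have := self_itv hxy; rewrite E.
- rewrite [rinv n.+1 _ _]/=; case: ifP => hxy; last by [].
  move: hm; rewrite leqn0 size_eq0 => /eqP E.
  by have := self_itv hxy; rewrite E.
- rewrite [rinv n.+1 _ _]/= [rinv m.+1 _ _]/=; case: ifP => _; last by [].
  rewrite big_seq_cond [in RHS]big_seq_cond.
  rewrite (eq_bigr (fun z => s x z * rinv m z y)); first by [].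
  move=> z /andP[zI zx].
  have hl := size_lt zI zx.
  by rewrite (IH m z y) //; rewrite -ltnS; apply: leq_trans hl _.
Qed.

Definition rt x y := rinv (size (itv x y)) x y.

Lemma rt_eq x y : (x <= y)%O -> rt x y = (s x x)^-1 * ((x == y)%:R -
        \sum_(z <- itv x y | z != x) s x z * rt z y).
Proof.
move=> hxy; rewrite /rt.
have : (0 < size (itv x y))%N by case: (itv x y) (self_itv hxy).
case E: (size (itv x y)) => [|n] h0; first by rewrite ltnn in h0.
rewrite [rinv n.+1 _ _]/= hxy big_seq_cond [in RHS]big_seq_cond.
rewrite (eq_bigr (fun z => s x z * rinv (size (itv z y)) z y)); first by [].
move=> z /andP[zI zx].
rewrite (@rinv_stab n (size (itv z y))); first by []; last by [].
by rewrite -ltnS -E; exact: size_lt.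
Qed.

Lemma rt_inc : incidence rt.
Proof. by move=> x y h; rewrite /rt itv_nil. Qed.

Lemma rt_right : mul s rt = inc_one.
Proof.
apply: functional_extensionality => x; apply: functional_extensionality => y.
case: (boolP (x <= y)%O) => h; last by rewrite mul_inc // one_inc.
rewrite /inc_mul (bigD1_seq x) ?self_itv ?uniq_itv //= (rt_eq h).
by rewrite mulrA mulfV // mul1r subrK.
Qed.

Lemma rt_diag x : rt x x != 0.
Proof.
rewrite rt_eq // eqxx big1_seq ?subr0 ?mulr1 ?invr_eq0 //.
move=> z /andP[zx]; rewrite mem_itv => /andP[h1 h2].
by have := le_anti (introT andP (conj h1 h2)); move=> e; rewrite e eqxx in zx.
Qed.
End Inv.

Lemma inv_exists (s : X -> X -> F) : incidence s -> (forall x, s x x != 0) ->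
  exists t, incidence t /\ mul s t = inc_one /\ mul t s = inc_one.
Proof.
move=> Hs Hd; exists (rt s); split; first exact: rt_inc.
split; first exact: rt_right.
have Ht : incidence (rt s) by exact: rt_inc.
have Htd : forall x, rt s x x != 0 by move=> x; exact: rt_diag.
have E : s = rt (rt s).
  rewrite -[RHS]mul1f; last exact: rt_inc.
  have R1 : mul s (rt s) = inc_one by exact: rt_right.
  have R2 : mul (rt s) (rt (rt s)) = inc_one by exact: rt_right.
  by rewrite -R1 mulA R2 mulf1.
have R2 : mul (rt s) (rt (rt s)) = inc_one by exact: rt_right.
by rewrite {2}E R2.
Qed.


Lemma pow_xx (f : X -> X -> F) n x : inc_pow itv f n x x = f x x ^+ n.
Proof.
elim: n => [|n IH]; first by rewrite /= /inc_one eqxx.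
by rewrite [inc_pow _ _ _]/= mul_xx IH exprSr.
Qed.

Lemma pow_diag (d : X -> X -> F) n : diagonal d -> incidence d -> diagonal (inc_pow itv d n).
Proof.
move=> Hd Hi; elim: n => [|n IH] x y xy.
  by rewrite /= /inc_one (negbTE xy).
change (inc_mul itv (inc_pow itv d n) d x y = 0).
by rewrite diag_mul // (Hd x y xy) mulr0.
Qed.

Lemma conj_pow (sg ta d : X -> X -> F) n : incidence d -> mul ta sg = inc_one ->
  inc_pow itv (mul (mul sg d) ta) n.+1 = mul (mul sg (inc_pow itv d n.+1)) ta.
Proof.
move=> Hd Hts; elim: n => [|n IH].
  change (mul inc_one (mul (mul sg d) ta) = mul (mul sg (mul inc_one d)) ta).
  by rewrite !mul1f //; exact: mul_inc.
change (mul (inc_pow itv (mul (mul sg d) ta) n.+1) (mul (mul sg d) ta) =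
   mul (mul sg (mul (inc_pow itv d n.+1) d)) ta).
rewrite IH !mulA -(mulA ta sg) Hts mul1f //; exact: mul_inc.
Qed.
End Inc.

Unset Implicit Arguments.
Set Strict Implicit.

Theorem propositionA4 (k : nat) (disp : Order.disp_t) (X : porderType disp)
  (itv : X -> X -> seq X) (F : fieldType) :
  (2 <= k)%N ->
  locally_finite_enum itv ->
  (exists z : F, (k.-1).-primitive_root z) ->
  forall f : X -> X -> F, incidence f ->
  (inc_pow itv f k = f <->
   exists sigma tau d : X -> X -> F,
     incidence sigma /\ incidence tau /\ incidence d /\
     inc_mul itv sigma tau = inc_one /\
     inc_mul itv tau sigma = inc_one /\
     diagonal d /\ (forall x : X, d x x = 0 \/ (d x x) ^+ (k.-1) = 1) /\
     f = inc_mul itv (inc_mul itv sigma d) tau).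
Proof.
move=> k2 lf [z pz] f Hf.
case: k k2 pz => [|m] // k2 pz.
have m1 : (0 < m)%N by [].
split.
- move=> Hk.
  have Hroot : forall x, f x x = 0 \/ f x x ^+ m = 1.
    move=> x; have := pow_xx lf f m.+1 x; rewrite Hk => E.
    have : (f x x ^+ m - 1) * f x x == 0 by rewrite mulrBl mul1r -exprSr -E subrr.
    by rewrite mulf_eq0 subr_eq0 => /orP[/eqP-> | /eqP->]; [right|left].
  pose E := fun (lam : F) (x y : X) =>
     \sum_(i < m.+1) lam ^+ (m - i) * inc_pow itv f i x y - inc_one x y.
  pose tau' := fun x y => E (f x x) x y.
  have Ht_inc : incidence tau'.
    move=> x y h; have h1 : inc_one x y = 0 :> F by exact: one_inc.
    rewrite /tau' /E big1 ?sub0r ?h1 ?oppr0 //.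
    by move=> i _; rewrite (pow_inc lf f i h) mulr0.
  have Ht_diag : forall x, tau' x x != 0.
    move=> x; rewrite /tau' /E (eq_bigr (fun _ => f x x ^+ m)); last first.
      by move=> i _; rewrite (pow_xx lf) -exprD subnK // -ltnS.
    rewrite sumr_const card_ord /inc_one eqxx.
    case: (Hroot x) => ->.
      by rewrite expr0n (gtn_eqF m1) mul0rn sub0r oppr_eq0 oner_neq0.
    by rewrite mulrSr addrK; exact: prim_root_natf_neq0 pz.
  have Hev : forall x y, inc_mul itv tau' f x y = f x x * tau' x y.
    move=> x y; rewrite /inc_mul /tau' /E.
    have hl : f x x ^+ m.+1 = f x x.
      by case: (Hroot x) => h; [rewrite h expr0n | rewrite exprSr h mul1r].
    move: hl; set lam := f x x => hl.
    rewrite (eq_bigr (fun z => \sum_(i < m.+1) lam ^+ (m - i) * (inc_pow itv f i x z * f z y)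
        - inc_one x z * f z y)); last first.
      move=> w _; rewrite mulrBl mulr_suml; congr (_ - _).
      by apply: eq_bigr => i _; rewrite mulrA.
    rewrite sumrB exchange_big /=.
    change (\sum_(z <- itv x y) inc_one x z * f z y) with (inc_mul itv inc_one f x y).
    rewrite mul1f //.
    rewrite (eq_bigr (fun i : 'I_m.+1 => lam ^+ (m - i) * inc_pow itv f i.+1 x y)); last first.
      by move=> i _; rewrite -mulr_sumr.
    rewrite big_ord_recr /= subnn expr0 mul1r.
    change (inc_mul itv (inc_pow itv f m) f) with (inc_pow itv f m.+1).
    rewrite Hk addrK.
    rewrite big_ord_recl /= subn0 mulrBr mulrDr mulrA -exprS hl.
    change (inc_pow itv f 0 x y) with (inc_one x y : F).
    rewrite [_ + _ - _]addrAC subrr add0r mulr_sumr.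
    by apply: eq_bigr => i _; rewrite mulrA -exprS subnSK.
  have [t [Hti [Htt1 Htt2]]] := inv_exists lf Ht_inc Ht_diag.
  exists t, tau', (fun x y => if x == y then f x x else 0).
  split; first exact: Hti.
  split; first exact: Ht_inc.
  split.
    move=> x y h; case: eqP => // e; subst; by rewrite lexx in h.
  split; first exact: Htt2.
  split; first exact: Htt1.
  split; first by move=> x y /negbTE ->.
  split; first by move=> x; rewrite eqxx; exact: Hroot.
  rewrite (mulA lf).
  have -> : inc_mul itv (fun x y => if x == y then f x x else 0) tau' = inc_mul itv tau' f.
    apply: functional_extensionality => x; apply: functional_extensionality => y.
    rewrite (diag_mul lf) ?Hev ?eqxx //; by move=> a b /negbTE ->.
  by rewrite -(mulA lf) Htt2 (mul1f lf).
- move=> [s [t [d [Hs [Ht [Hd [Hst [Hts [Hdd [Hr ->]]]]]]]]]].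
  rewrite (conj_pow lf) //.
  have -> : inc_pow itv d m.+1 = d.
    apply: functional_extensionality => x; apply: functional_extensionality => y.
    change (inc_mul itv (inc_pow itv d m) d x y = d x y).
    rewrite (diag_mul lf); last exact: Hd; last exact: (pow_diag lf).
    rewrite (pow_xx lf).
    case: (eqVneq x y) => [<-|xy]; last by rewrite (Hdd _ _ xy) mulr0.
    by case: (Hr x) => ->; [rewrite mulr0 | rewrite mul1r].
  by [].
Qed.
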